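(* For every $n\ge1$, $\mathbf{ML}_n$ is structurally complete: for any formulas $\varphi,\psi$, if for every substitution $\sigma$ (a map from propositional variables to formulas, extended homomorphically to all formulas), $\sigma(\varphi)\in\mathbf{ML}_n$ implies $\sigma(\psi)\in\mathbf{ML}_n$, then $\varphi\to\psi\in\mathbf{ML}_n$.
   Context: Formulas are built from a countably infinite set of propositional variables and $\bot$ using $\land,\lor,\to$; $\neg\alpha:=\alpha\to\bot$; intuitionistic Kripke semantics with valuations assigning upward-closed sets. For $n\ge1$, $\mathfrak{F}_n=\langle\wp^*(n),\supseteq\rangle$, where $n=\{0,\dots,n-1\}$ and $\wp^*(n)$ is the set of non-empty subsets of $n$; its root is $n$. $\mathbf{ML}_n$ is the set of formulas $\varphi$ with $\mathfrak{F}_n,V,n\vDash\varphi$ for every valuation $V$. *)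

(* Defs.v *)
From mathcomp Require Import all_boot.
Set Implicit Arguments. Unset Strict Implicit. Unset Printing Implicit Defensive.

Inductive form : Type :=
| Var : nat -> form
| Bot : form
| And : form -> form -> form
| Or  : form -> form -> form
| Imp : form -> form -> form.

Definition Neg (a : form) : form := Imp a Bot.

Fixpoint subst (s : nat -> form) (a : form) : form :=
  match a with
  | Var p => s p
  | Bot => Bot
  | And a b => And (subst s a) (subst s b)
  | Or a b => Or (subst s a) (subst s b)
  | Imp a b => Imp (subst s a) (subst s b)
  end.

(* The Medvedev frame F_n: worlds are nonempty subsets of 'I_n = {0,...,n-1},
   accessibility w R v iff w ⊇ v (i.e. v \subset w). *)
Definition world (n : nat) (w : {set 'I_n}) : Prop := w != set0.

(* A valuation assigns to each variable an upward-closed set of worlds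
   (upward along R, i.e. downward along inclusion). *)
Definition upclosed (n : nat) (V : nat -> {set 'I_n} -> Prop) : Prop :=
  forall p (w v : {set 'I_n}), world w -> world v -> v \subset w -> V p w -> V p v.

Fixpoint forces (n : nat) (V : nat -> {set 'I_n} -> Prop) (w : {set 'I_n})
  (a : form) : Prop :=
  match a with
  | Var p => V p w
  | Bot => False
  | And a b => forces V w a /\ forces V w b
  | Or a b => forces V w a \/ forces V w b
  | Imp a b => forall v : {set 'I_n}, world v -> v \subset w ->
                 forces V v a -> forces V v b
  end.

Definition ML (n : nat) (a : form) : Prop :=
  forall V : nat -> {set 'I_n} -> Prop, upclosed V -> forces V [set: 'I_n] a.

(* Main.v *)
Require Import Defs.
From mathcomp Require Import all_boot.
From Stdlib Require Import ClassicalEpsilon.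
Set Implicit Arguments. Unset Strict Implicit.

Definition Top := Imp Bot Bot.
Definition bigOr (l : seq form) := foldr Or Bot l.
Definition bigAnd (l : seq form) := foldr And Top l.
Definition dec (P : Prop) : bool := if excluded_middle_informative P then true else false.
Lemma decP P : dec P <-> P.
Proof. rewrite /dec; case: excluded_middle_informative => //. Qed.

Lemma forces_bigOr n (U : nat -> {set 'I_n} -> Prop) x (T : eqType) (f : T -> form) (s : seq T) :
  forces U x (bigOr (map f s)) <-> exists y, y \in s /\ forces U x (f y).
Proof.
elim: s => [|a s IH] /=; first by split => // -[y []].
split.
- case=> [H|/IH [y [Hy Hf]]]; first by exists a; rewrite inE eqxx.
  by exists y; rewrite inE Hy orbT.
- case=> y []; rewrite inE => /orP [/eqP->|Hy] Hf; first by left.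
  by right; apply/IH; exists y.
Qed.

Lemma forces_bigAnd n (U : nat -> {set 'I_n} -> Prop) x (T : eqType) (f : T -> form) (s : seq T) :
  forces U x (bigAnd (map f s)) <-> forall y, y \in s -> forces U x (f y).
Proof.
elim: s => [|a s IH] /=; first by split => // _ v _ _.
split.
- case=> Ha /IH Hs y; rewrite inE => /orP [/eqP->|Hy] //; exact: Hs.
- move=> H; split; first by apply: H; rewrite inE eqxx.
  by apply/IH => y Hy; apply: H; rewrite inE Hy orbT.
Qed.

Lemma sub1 n (v : {set 'I_n}) i : world v -> v \subset [set i] -> v = [set i].
Proof.
rewrite /world subset1 => /negbTE -> ; rewrite orbF; by move/eqP.
Qed.

Lemma world1 n (i : 'I_n) : world [set i].
Proof. by apply/set0Pn; exists i; rewrite inE. Qed.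

Lemma persist n (V : nat -> {set 'I_n} -> Prop) : upclosed V ->
  forall a w v, world w -> world v -> v \subset w -> forces V w a -> forces V v a.
Proof.
move=> HV; elim=> [p||a IHa b IHb|a IHa b IHb|a IHa b IHb] w v Hw Hv Hvw /=.
- exact: HV.
- by [].
- by case=> ??; split; [apply: (IHa w)|apply: (IHb w)].
- by case=> ?; [left; apply: (IHa w)|right; apply: (IHb w)].
- move=> H u Hu Huv; apply: H => //; exact: subset_trans Huv Hvw.
Qed.

Section S.
Variables (n : nat) (w : {set 'I_n}) (d : 'I_n).
Hypothesis dw : d \in w.

Definition G (b : {ffun 'I_n -> bool}) : 'I_n :=
  if [pick j in w | b j] is Some j then j else d.
Lemma G_in b : G b \in w.
Proof. rewrite /G; case: pickP => [j /andP[]|] //. Qed.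

Definition lit (b : {ffun 'I_n -> bool}) :=
  bigAnd (map (fun j : 'I_n => if b j then Var j else Neg (Var j)) (enum 'I_n)).
Definition delta (z : {set 'I_n}) :=
  bigOr (map lit [seq b <- enum {ffun 'I_n -> bool} | G b \in z]).
Definition sigma (V : nat -> {set 'I_n} -> Prop) (p : nat) :=
  bigOr (map (fun z => Neg (Neg (delta z)))
    [seq z <- enum {set 'I_n} | (z != set0) && (z \subset w) && dec (V p z)]).
Definition pat (U : nat -> {set 'I_n} -> Prop) (i : 'I_n) : {ffun 'I_n -> bool} :=
  [ffun j : 'I_n => dec (U j [set i])].
Definition g U i := G (pat U i).

Lemma neg_single (U : nat -> {set 'I_n} -> Prop) i (j : nat) : forces U [set i] (Neg (Var j)) <-> ~ U j [set i].
Proof.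
rewrite /Neg; split => /= H.
- move=> Hu; by apply: (H [set i] (world1 i) (subxx _)).
  idtac.
- by move=> v Hv /(sub1 Hv) ->.
Qed.

Lemma lit_single (U : nat -> {set 'I_n} -> Prop) i b : forces U [set i] (lit b) <-> b = pat U i.
Proof.
rewrite /lit forces_bigAnd; split.
- move=> H; apply/ffunP => j; rewrite ffunE.
  have := H j (mem_enum _ j); case: (b j) => /=.
  + by move=> Hu; symmetry; apply/decP.
  + move/neg_single => Hn; case E: (dec _) => //; by move/decP: E => /Hn.
- move=> -> j _; rewrite ffunE; case E: (dec _) => /=.
  + by apply/decP; rewrite E.
  + apply/neg_single => /decP; by rewrite E.
Qed.

Lemma delta_single (U : nat -> {set 'I_n} -> Prop) i z : forces U [set i] (delta z) <-> g U i \in z.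
Proof.
rewrite /delta forces_bigOr; split.
- case=> b []; rewrite mem_filter => /andP [Hz _] /lit_single Hb.
  by rewrite /g -Hb.
- move=> H; exists (pat U i); split; last exact/lit_single.
  by rewrite mem_filter H mem_enum.
Qed.

Lemma nnd (U : nat -> {set 'I_n} -> Prop) (x z : {set 'I_n}) : world x ->
  (forces U x (Neg (Neg (delta z))) <-> g U @: x \subset z).
Proof.
move=> Hx; split.
- move=> H; apply/subsetP => j /imsetP [i Hi ->].
  case: (boolP (g U i \in z)) => // Hn; exfalso.
  apply: (H [set i] (world1 i)); first by rewrite sub1set.
  by move=> v Hv /(sub1 Hv) -> /delta_single; rewrite (negbTE Hn).
- move=> H v Hv Hvx Hn; case/set0Pn: Hv => i Hi.
  apply: (Hn [set i] (world1 i)); first by rewrite sub1set.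
  apply/delta_single; apply: (subsetP H); apply/imsetP; exists i => //.
  exact: (subsetP Hvx).
Qed.

Lemma gx_world (U : nat -> {set 'I_n} -> Prop) (x : {set 'I_n}) : world x -> world (g U @: x).
Proof. by rewrite /world imset_eq0. Qed.

Lemma gx_sub (U : nat -> {set 'I_n} -> Prop) (x : {set 'I_n}) : g U @: x \subset w.
Proof. apply/subsetP => j /imsetP [i _ ->]; exact: G_in. Qed.

Lemma sigma_var (V U : nat -> {set 'I_n} -> Prop) p (x : {set 'I_n}) : upclosed V -> world x ->
  (forces U x (sigma V p) <-> V p (g U @: x)).
Proof.
move=> HV Hx; rewrite /sigma forces_bigOr; split.
- case=> z []; rewrite mem_filter => /andP [/andP [/andP [Hz0 _] /decP HVz] _] /(nnd _ _ Hx) Hs.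
  apply: (HV p z) => //; exact: gx_world.
- move=> H; exists (g U @: x); split; last exact/nnd.
  rewrite mem_filter mem_enum andbT gx_sub andbT.
  apply/andP; split; first exact: gx_world.
  exact/decP.
Qed.

Lemma key (V U : nat -> {set 'I_n} -> Prop) : upclosed V -> forall a x, world x ->
  (forces U x (subst (sigma V) a) <-> forces V (g U @: x) a).
Proof.
move=> HV; elim=> [p||a IHa b IHb|a IHa b IHb|a IHa b IHb] x Hx /=.
- exact: sigma_var.
- by [].
- by rewrite (IHa x Hx) (IHb x Hx).
- by rewrite (IHa x Hx) (IHb x Hx).
- split.
  + move=> H y Hy Hyx Ha.
    set y' := x :&: g U @^-1: y.
    have Hy' : g U @: y' = y.
      apply/eqP; rewrite eqEsubset; apply/andP; split.
      * apply/subsetP => j /imsetP [i]; rewrite !inE => /andP [_ Hi] ->; exact Hi.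
      * apply/subsetP => j Hj; have := subsetP Hyx j Hj => /imsetP [i Hi Ej].
        apply/imsetP; exists i => //; rewrite !inE Hi /=; by rewrite -Ej.
    have Wy' : world y'.
      apply/negP => /eqP E; move: Hy; rewrite /world -Hy' E imset0 eqxx //.
    have := H y' Wy' (subsetIl _ _).
    rewrite (IHa y' Wy') (IHb y' Wy') Hy'; by apply.
  + move=> H v Hv Hvx; rewrite (IHa v Hv) (IHb v Hv); apply: H.
    * exact: gx_world.
    * exact: imsetS.
Qed.

End S.

Definition U0 n : nat -> {set 'I_n} -> Prop :=
  fun j v => exists i : 'I_n, j = i /\ v \subset [set i].

Arguments U0 : clear implicits.

Lemma U0_up n : upclosed (U0 n).
Proof. move=> p w v _ _ Hvw [i [-> H]]; exists i; split => //; exact: subset_trans Hvw H. Qed.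

Lemma gU0 n (v : {set 'I_n}) d i : g v d (U0 n) i = if i \in v then i else d.
Proof.
rewrite /g /G; case: pickP => [j /andP [Hj Hp]| Hn].
- move: Hp; rewrite ffunE => /decP [i' [Ej]].
  rewrite subset1 => /orP [/eqP E|]; last by move/eqP/setP/(_ i); rewrite !inE eqxx.
  have Eii : i = i' by apply/set1P; rewrite -E set11.
  have Eji : j = i by apply: val_inj; rewrite /= Ej Eii.
  by rewrite -Eji Hj.
- case: ifP => // Hi; exfalso.
  have := Hn i; rewrite Hi /= ffunE.
  suff -> : dec (U0 n i [set i]) by [].
  by apply/decP; exists i.
Qed.

Theorem mainTheorem12 (n : nat) : 1 <= n ->
  forall phi psi : form,
    (forall s : nat -> form, ML n (subst s phi) -> ML n (subst s psi)) ->
    ML n (Imp phi psi).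
Proof.
move=> _ phi psi H V HV v Hv _ Hphi.
have [d dv] := set0Pn _ Hv.
have Wf : world [set: 'I_n].
  by apply/set0Pn; exists d.
have Hml : ML n (subst (sigma v d V) phi).
  move=> U _; apply/(key dv U HV phi Wf).
  apply: (persist HV Hv); [exact: gx_world|exact: (gx_sub dv)| exact Hphi].
have := H _ Hml (U0 n) (@U0_up n); rewrite (key dv _ HV psi Wf).
suff -> : g v d (U0 n) @: [set: 'I_n] = v by [].
apply/eqP; rewrite eqEsubset (gx_sub dv) /=.
apply/subsetP => j Hj; apply/imsetP; exists j; first by rewrite in_setT.
by have := @gU0 n v d j; rewrite Hj => ->.
Qed.
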